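(* Consider a well-formed execution $\beta$ of the md-value protocol described in the context in which the event $\text{md-value-send}(t,v)_p$ occurs (at writer $p$). Then there is a state $\sigma$ of $\beta$ occurring after the event $\text{md-value-send}(t,v)_p$ such that, for the sender automaton of $p$ and for the server automaton of every $s\in\mathcal{S}$, either (i) that automaton's variable $failed$ is $true$, or (ii) in every state of $\beta$ following $\sigma$, none of that automaton's state variables contains $v$ or any of the coded elements $\Phi_{s'}(v)$, $s'\in\mathcal{S}$.
   Context: System model: an asynchronous message-passing system with a set $\mathcal{W}$ of writers, a set $\mathcal{R}$ of readers and a set $\mathcal{S}$ of $n$ servers, ordered $s_1<\dots<s_n$. Every client–server pair and every server–server pair is joined by a reliable point-to-point channel (a message is eventually delivered if the destination does not crash, even if the sender crashes; no ordering assumption). Processes fail only by crashing; at most $f$ servers crash, $1\le f\le (n-1)/2$; any number of clients may crash. An execution is well-formed if each client starts a new operation only after its previous one completed. Coding: $[n,k]$ MDS code with encoder $\Phi$; $\Phi_s(v)$ is the coded element of value $v$ for server $s$. Tags lie in a totally ordered set $\mathcal{T}$. The md-value protocol as I/O automata. Sender automaton at writer $p$: state variables $failed$ (Boolean, initially false), $active$ (Boolean), $mCount$ (integer counter), a FIFO queue $send\_buff$ (initially empty), a message identifier $mID$, and $currTag$. On input $\text{md-value-send}(t,v)_p$ (if not failed): $mCount$ is incremented, $mID\gets(p,mCount)$, $send\_buff$ is set to the messages $((mID,(t,v),\text{''full''}),s)$ for $s\in\{s_1,\dots,s_{f+1}\}$ in server order, $active\gets true$, $currTag\gets t$. The output $\text{send}$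 action (enabled when not failed) removes the first element of $send\_buff$ and puts its message on the channel to its destination; when $send\_buff$ is empty and $active$ holds, output $\text{md-value-send-ack}(t)_p$ sets $active\gets false$, $currTag\gets\bot$. An internal $\text{fail}$ action sets $failed\gets true$, after which no further actions are taken. Server automaton at $s=s_i$: state variables $failed$ (initially false), a map $status$ from message identifiers to $\{\text{ready},\text{sending},\text{delivered}\}$ (initially undefined, $\bot$), a map $content$ from message identifiers to a (tag, coded element) pair or $\bot$, and per-identifier FIFO output queues $outQueue(mID)$. On receiving $(mID,(t,v),\text{''full''})$ (if not failed and $status(mID)=\bot$): append to $outQueue(mID)$ the messages $(mID,(t,v),\text{''full''})$ for $s_{i+1},\dots,s_{f+1}$ and $(mID,(t,\Phi_{s'}(v)),\text{''coded''})$ for every other server $s'$ outside $\{s_{1},\dots,s_{f+1}\}$; set $status(mID)\gets\text{sending}$ and $content(mID)\gets(t,\Phi_s(v))$. On receiving $(mID,(t,c),\text{''coded''})$ (if not failed and $status(mID)\neq\text{delivered}$): $status(mID)\gets\text{ready}$, $content(mID)\gets(t,c)$. The output $\text{send}$ action (if not failed) sends the first element of $outQueue(mID)$ and removes it; if the queue becomes empty, $status(mID)\gets\text{ready}$. The output $\text{md-value-deliver}(t,c)_s$ is enabled when not failed, $status(mID)=\text{ready}$ and $content(mID)=(t,c)$; it sets $status(mID)\gets\text{delivered}$ and $content(mID)\gets\bot$. An internal $\text{fail}$ action sets $failed\gets true$. The protocol is the composition of these automata with the reliable channel automata. *)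

(* Defs.v *)
From mathcomp Require Import all_boot all_order.

Section MdValue.

(* writers, number of servers n (servers are 'I_n, ordered by index:
   s_1 < ... < s_n is 0 < ... < n-1), crash bound f, tags, values,
   coded elements and the encoder Phi. *)
Variables (W : finType) (n f : nat) (T V C : Type) (Phi : 'I_n -> V -> C).

(* message identifiers (p, mCount) *)
Definition MID : Type := (W * nat)%type.

Inductive payload : Type :=
| Full of T & V
| Coded of T & C.

Definition msg : Type := (MID * payload)%type.

Inductive status : Type := Ready | Sending | Delivered.

(* sender automaton at a writer; [None] for mID / currTag is "bot" *)
Record wstate : Type := WState {
  w_failed : bool;
  w_active : bool;
  w_mCount : nat;
  w_buff : seq (msg * 'I_n);          (* send_buff: (message, destination) *)
  w_mID : option MID;
  w_currTag : option T }.

(* server automaton; [None] is "bot" / undefined *)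
Record sstate : Type := SState {
  s_failed : bool;
  s_status : MID -> option status;
  s_content : MID -> option (T * C);
  s_outq : MID -> seq (msg * 'I_n) }.  (* outQueue(mID): (message, destination) *)

Definition node : Type := (W + 'I_n)%type.

Record gstate : Type := GState {
  g_w : W -> wstate;
  g_s : 'I_n -> sstate;
  g_ch : node -> 'I_n -> seq msg }.   (* messages in transit (unordered bag) *)

Definition upd {A : eqType} {B : Type} (g : A -> B) (a : A) (b : B) : A -> B :=
  fun x => if x == a then b else g x.

Definition w_init : wstate := WState false false 0 [::] None None.
Definition s_init : sstate :=
  SState false (fun _ => None) (fun _ => None) (fun _ => [::]).
Definition g_init : gstate :=
  GState (fun _ => w_init) (fun _ => s_init) (fun _ _ => [::]).

(* the first f+1 servers s_1..s_{f+1} are those of (0-based) index <= f *)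
Definition full_server (s : 'I_n) : bool := (val s <= f)%N.

Definition w_on_send (p : W) (t : T) (v : V) (ws : wstate) : wstate :=
  if w_failed ws then ws else
  let id := (p, (w_mCount ws).+1) in
  WState false true (w_mCount ws).+1
    [seq ((id, Full t v), s) | s <- enum 'I_n & full_server s]
    (Some id) (Some t).

Definition s_on_recv (s : 'I_n) (m : msg) (ss : sstate) : sstate :=
  if s_failed ss then ss else
  let id := m.1 in
  match m.2 with
  | Full t v =>
      match s_status ss id with
      | None =>
          let out :=
            [seq ((id, Full t v), s') | s' <- enum 'I_n &
                                        (val s < val s')%N && full_server s'] ++
            [seq ((id, Coded t (Phi s' v)), s') | s' <- enum 'I_n &
                                        ~~ full_server s' && (s' != s)] in
          SState false (upd (s_status ss) id (Some Sending))
                 (upd (s_content ss) id (Some (t, Phi s v)))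
                 (upd (s_outq ss) id (s_outq ss id ++ out))
      | Some _ => ss
      end
  | Coded t c =>
      match s_status ss id with
      | Some Delivered => ss
      | _ => SState false (upd (s_status ss) id (Some Ready))
                   (upd (s_content ss) id (Some (t, c))) (s_outq ss)
      end
  end.

Inductive act : Type :=
| A_mdsend of W & T & V
| A_wsend of W
| A_ack of W & T
| A_wfail of W
| A_recv of node & 'I_n & msg
| A_ssend of 'I_n & MID
| A_deliver of 'I_n & MID & T & C
| A_sfail of 'I_n.

Definition set_w (g : gstate) (p : W) (ws : wstate) : gstate :=
  GState (upd (g_w g) p ws) (g_s g) (g_ch g).
Definition set_s (g : gstate) (s : 'I_n) (ss : sstate) : gstate :=
  GState (g_w g) (upd (g_s g) s ss) (g_ch g).
Definition set_ch (g : gstate) (src : node) (dst : 'I_n) (l : seq msg) : gstate :=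
  GState (g_w g) (g_s g)
    (fun a b => if (a == src) && (b == dst) then l else g_ch g a b).

Inductive step : gstate -> act -> gstate -> Prop :=
| st_mdsend g p t v :
    step g (A_mdsend p t v) (set_w g p (w_on_send p t v (g_w g p)))
| st_wsend g p m d rest :
    w_failed (g_w g p) = false ->
    w_buff (g_w g p) = (m, d) :: rest ->
    step g (A_wsend p)
      (set_ch (set_w g p (let ws := g_w g p in
                 WState (w_failed ws) (w_active ws) (w_mCount ws) rest
                        (w_mID ws) (w_currTag ws)))
              (inl p) d (rcons (g_ch g (inl p) d) m))
| st_ack g p t :
    w_failed (g_w g p) = false ->
    w_buff (g_w g p) = [::] ->
    w_active (g_w g p) = true ->
    w_currTag (g_w g p) = Some t ->
    step g (A_ack p t)
      (set_w g p (let ws := g_w g p in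
                  WState (w_failed ws) false (w_mCount ws) (w_buff ws)
                         (w_mID ws) None))
| st_wfail g p :
    step g (A_wfail p)
      (set_w g p (let ws := g_w g p in
                  WState true (w_active ws) (w_mCount ws) (w_buff ws)
                         (w_mID ws) (w_currTag ws)))
| st_recv g src dst m l1 l2 :
    g_ch g src dst = l1 ++ m :: l2 ->
    step g (A_recv src dst m)
      (set_s (set_ch g src dst (l1 ++ l2)) dst (s_on_recv dst m (g_s g dst)))
| st_ssend g s id m d rest :
    s_failed (g_s g s) = false ->
    s_outq (g_s g s) id = (m, d) :: rest ->
    step g (A_ssend s id)
      (set_ch (set_s g s (let ss := g_s g s in
                 SState (s_failed ss)
                   (if rest is [::] then upd (s_status ss) id (Some Ready)
                    else s_status ss)
                   (s_content ss) (upd (s_outq ss) id rest)))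
              (inr s) d (rcons (g_ch g (inr s) d) m))
| st_deliver g s id t c :
    s_failed (g_s g s) = false ->
    s_status (g_s g s) id = Some Ready ->
    s_content (g_s g s) id = Some (t, c) ->
    step g (A_deliver s id t c)
      (set_s g s (let ss := g_s g s in
                  SState (s_failed ss) (upd (s_status ss) id (Some Delivered))
                    (upd (s_content ss) id None) (s_outq ss)))
| st_sfail g s :
    step g (A_sfail s)
      (set_s g s (let ss := g_s g s in
                  SState true (s_status ss) (s_content ss) (s_outq ss))).

(* An execution: an infinite sequence of states, where step i is either an
   action of the composition or a stuttering (no-op) step, so that finite
   executions are represented by stuttering forever at the end. *)
Record execution : Type := Exec {
  ex_st : nat -> gstate;
  ex_act : nat -> option act }.

Definition is_execution (e : execution) : Prop :=
  ex_st e 0 = g_init /\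
  forall i, match ex_act e i with
            | None => ex_st e i.+1 = ex_st e i
            | Some a => step (ex_st e i) a (ex_st e i.+1)
            end.

Definition fair_task (e : execution) (en : gstate -> Prop)
    (occ : option act -> Prop) : Prop :=
  forall i, exists j, (i <= j)%N /\ (~ en (ex_st e j) \/ occ (ex_act e j)).

Definition fair (e : execution) : Prop :=
  (forall p, fair_task e
     (fun g => w_failed (g_w g p) = false /\ w_buff (g_w g p) <> [::])
     (fun a => a = Some (A_wsend p))) /\
  (forall p, fair_task e
     (fun g => w_failed (g_w g p) = false /\ w_buff (g_w g p) = [::] /\
               w_active (g_w g p) = true)
     (fun a => exists t, a = Some (A_ack p t))) /\
  (forall s id, fair_task e
     (fun g => s_failed (g_s g s) = false /\ s_outq (g_s g s) id <> [::])
     (fun a => a = Some (A_ssend s id))) /\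
  (forall s id, fair_task e
     (fun g => s_failed (g_s g s) = false /\
               s_status (g_s g s) id = Some Ready /\
               s_content (g_s g s) id <> None)
     (fun a => exists t c, a = Some (A_deliver s id t c))).

Definition reliable_channels (e : execution) : Prop :=
  forall i src dst m l1 l2, g_ch (ex_st e i) src dst = l1 ++ m :: l2 ->
    exists j, (i <= j)%N /\
      (ex_act e j = Some (A_recv src dst m) \/ s_failed (g_s (ex_st e j) dst)).

Definition crash_bound (e : execution) : Prop :=
  forall i, (#|[set s : 'I_n | s_failed (g_s (ex_st e i) s)]| <= f)%N.

Definition well_formed (e : execution) : Prop :=
  forall i j p t v t' v', (i < j)%N ->
    ex_act e i = Some (A_mdsend p t v) -> ex_act e j = Some (A_mdsend p t' v') ->
    exists k t'', (i < k < j)%N /\ ex_act e k = Some (A_ack p t'').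

(* membership in a seq, as a Prop (no decidable equality needed) *)
Fixpoint InS {A : Type} (x : A) (s : seq A) : Prop :=
  if s is y :: s' then y = x \/ InS x s' else False.

Definition coded_of (v : V) (c : C) : Prop := exists s', c = Phi s' v.

Definition payload_has (v : V) (pl : payload) : Prop :=
  match pl with
  | Full _ v' => v' = v
  | Coded _ c => coded_of v c
  end.

Definition w_holds (id : MID) (v : V) (ws : wstate) : Prop :=
  exists m d, InS (m, d) (w_buff ws) /\ m.1 = id /\ payload_has v m.2.

Definition s_holds (id : MID) (v : V) (ss : sstate) : Prop :=
  (exists t c, s_content ss id = Some (t, c) /\ coded_of v c) \/
  (exists m d, InS (m, d) (s_outq ss id) /\ m.1 = id /\ payload_has v m.2).

Definition mds (k : nat) : Prop :=
  (0 < k <= n)%N /\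
  forall (S : {set 'I_n}) (v w : V), #|S| = k ->
    (forall s, s \in S -> Phi s v = Phi s w) -> v = w.

End MdValue.

(* Main.v *)
Require Import Defs.
From mathcomp Require Import all_boot all_order zify.
From Stdlib Require Import Classical.

Section Pf.
Variables (W : finType) (n f : nat) (T V C : Type) (Phi : 'I_n -> V -> C).

Local Notation G := (gstate W n T V C).
Local Notation WS := (wstate W n T V C).
Local Notation SS := (sstate W n T V C).
Local Notation M := (msg W T V C).
Local Notation MI := (MID W).
Local Notation gw := (g_w W n T V C).
Local Notation gs := (g_s W n T V C).
Local Notation gch := (g_ch W n T V C).
Local Notation wbuff := (w_buff W n T V C).
Local Notation wfl := (w_failed W n T V C).
Local Notation wcnt := (w_mCount W n T V C).
Local Notation sst := (s_status W n T V C).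
Local Notation scont := (s_content W n T V C).
Local Notation soq := (s_outq W n T V C).
Local Notation sfl := (s_failed W n T V C).
Local Notation stp := (step W n f T V C Phi).
Local Notation fs := (full_server n f).

Lemma sum_upd {A : finType} (h1 h2 : A -> nat) (a : A) :
  (forall x, x != a -> h1 x = h2 x) -> \sum_x h1 x + h2 a = \sum_x h2 x + h1 a.
Proof.
move=> H; rewrite (bigD1 a) //= [in RHS](bigD1 a) //=.
rewrite (eq_bigr h2) => [|x ?]; [lia|exact: H].
Qed.



Lemma InS_cat {A} (x : A) s1 s2 : InS x (s1 ++ s2) <-> InS x s1 \/ InS x s2.
Proof. elim: s1 => [|y s1 IH] /=; first tauto. rewrite IH; tauto. Qed.

Lemma InS_rcons {A} (x : A) s y : InS x (rcons s y) <-> InS x s \/ y = x.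
Proof. rewrite -cats1 InS_cat /=; tauto. Qed.

Lemma InS_mapf {A B} {F : A -> B} {P : pred A} {s y} :
  InS y [seq F z | z <- s & P z] -> exists z, P z /\ F z = y.
Proof.
elim: s => [|z s IH] //=; case: ifP => Pz /=; last exact: IH.
case=> [<-|/IH //]; by exists z.
Qed.

Lemma proj_soq a b c d : soq (SState W n T V C a b c d) = d. Proof. by []. Qed.
Lemma proj_sst a b c d : sst (SState W n T V C a b c d) = b. Proof. by []. Qed.
Lemma proj_scont a b c d : scont (SState W n T V C a b c d) = c. Proof. by []. Qed.
Lemma proj_sfl a b c d : sfl (SState W n T V C a b c d) = a. Proof. by []. Qed.
Ltac simp := rewrite ?proj_soq ?proj_sst ?proj_scont ?proj_sfl /upd /=.

Definition good (m : M) (d : 'I_n) : bool :=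
  match m.2 with Full _ _ => fs d | Coded _ _ => ~~ fs d end.

Definition sfact (s : 'I_n) (ss : SS) (x : MI) : Prop :=
  match sst ss x with
  | None => scont ss x = None /\ soq ss x = [::]
  | Some Sending => soq ss x <> [::] /\ scont ss x <> None /\ fs s
  | Some Ready => scont ss x <> None /\ soq ss x = [::]
  | Some Delivered => scont ss x = None /\ soq ss x = [::]
  end.

Definition Inv (g : G) : Prop :=
  (forall src d m, InS m (gch g src d) -> good m d) /\
  (forall q y, InS y (wbuff (gw g q)) -> good y.1 y.2 /\ y.1.1 = (q, wcnt (gw g q))) /\
  (forall s x y, InS y (soq (gs g s) x) -> good y.1 y.2 /\ y.1.1 = x) /\
  (forall s x, sfact s (gs g s) x).

Lemma Inv_init : Inv (g_init W n T V C).
Proof. by split; [|split; [|split]] => //=. Qed.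


Lemma out_nonempty (hf : (1 <= f)%N) (hn : (f.*2 + 1 <= n)%N) (s : 'I_n) (x : MI) t v (Hs : fs s) :
  [seq ((x, Full T V C t v), s') | s' <- enum 'I_n & (val s < val s')%N && fs s'] ++
  [seq ((x, Coded T V C t (Phi s' v)), s') | s' <- enum 'I_n & ~~ fs s' && (s' != s)] <> [::].
Proof.
have hn1 : (n.-1 < n)%N by lia.
set s' := Ordinal hn1.
have Hs' : ~~ fs s' && (s' != s).
  apply/andP; split; first by rewrite /full_server /=; lia.
  apply/negP => /eqP E; move: Hs; rewrite -E /full_server /=; lia.
move=> E; have := f_equal size E; rewrite size_cat !size_map /=.
have : has (fun s'0 => ~~ fs s'0 && (s'0 != s)) (enum 'I_n).
  by apply/hasP; exists s'; rewrite ?mem_enum.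
rewrite has_filter; case: (filter _ _) => //= ? ?; lia.
Qed.

Lemma Inv_step (hf : (1 <= f)%N) (hn : (f.*2 + 1 <= n)%N) g a g' :
  stp g a g' -> Inv g -> Inv g'.
Proof.
case=> {g a g'}.
-
  move=> g q t v [H1 [H2 [H3 H4]]]; split; [exact: H1|split; [|split; [exact: H3|exact: H4]]].
  move=> q' y /=; rewrite /upd /=; have [Eq|ne] := eqVneq q' q; [subst q'|]; last exact: H2.
  rewrite /w_on_send; case: ifP => _; first exact: H2.
  move=> /= Hy; have [z [Hz Ez]] := InS_mapf Hy; subst y; done.
-
  move=> g q m d rest Hf Hb [H1 [H2 [H3 H4]]]; split; [|split; [|split; [exact: H3|exact: H4]]].
  + move=> src d' m' /=; case: ifP => [/andP [/eqP _ /eqP ->]|_]; last exact: H1.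
    rewrite InS_rcons; case=> [/H1 //|<-].
    by have := H2 q (m, d); rewrite Hb => /(_ (or_introl erefl)) [].
  + move=> q' y /=; rewrite /upd /=; have [Eq|ne] := eqVneq q' q; [subst q'|]; last exact: H2.
    move=> /= Hy; apply: H2; rewrite Hb /=; by right.
-
  move=> g q t _ _ _ _ [H1 [H2 [H3 H4]]]; split; [exact: H1|split; [|split; [exact: H3|exact: H4]]].
  move=> q' y /=; rewrite /upd /=; have [Eq|ne] := eqVneq q' q; [subst q'|]; last exact: H2.
  exact: H2.
-
  move=> g q [H1 [H2 [H3 H4]]]; split; [exact: H1|split; [|split; [exact: H3|exact: H4]]].
  move=> q' y /=; rewrite /upd /=; have [Eq|ne] := eqVneq q' q; [subst q'|]; last exact: H2.
  exact: H2.
-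
  move=> g src dst m l1 l2 Hch [H1 [H2 [H3 H4]]].
  have Hm : good m dst by apply: (H1 src); rewrite Hch InS_cat /=; tauto.
  split; [|split; [exact: H2|split]].
  + move=> src' d' m' /=; case: ifP => [/andP [/eqP _ /eqP ->]|_]; last exact: H1.
    move=> Hm'; apply: (H1 src); rewrite Hch InS_cat /=; move: Hm'; rewrite InS_cat; tauto.
  + move=> s x y /=; rewrite /upd /=; have [Eq|ne] := eqVneq s dst; [subst s|]; last exact: H3.
    rewrite /s_on_recv; case: ifP => _; first exact: H3.
    case: m Hch Hm => x0 [t' v'|t' c] /= Hch Hm.
    * case E: (sst (gs g dst) x0) => [st|]; first exact: H3.
      rewrite /= /upd; have [Eq|nx] := eqVneq x x0; [subst x|]; last exact: H3.
      rewrite !InS_cat; case=> [/H3 //|Hy].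
      case: Hy => Hy; have [z [Hz Ez]] := InS_mapf Hy; subst y;
        by split=> //; rewrite /good /=; case/andP: Hz.
    * case E: (sst (gs g dst) x0) => [[| |]|]; try exact: H3.
  + move=> s x /=; rewrite /upd /=; have [Eq|ne] := eqVneq s dst; [subst s|]; last exact: H4.
    rewrite /s_on_recv; case: ifP => _; first exact: H4.
    have H4d := H4 dst.
    case: m Hch Hm => x0 [t' v'|t' c] /= Hch Hm.
    * case E: (sst (gs g dst) x0) => [st|]; first exact: H4.
      rewrite /sfact /= /upd; have [Eq|nx] := eqVneq x x0; [subst x|]; last exact: H4.
      split; [|split; [done|exact: Hm]]; move=> E2; apply: (out_nonempty hf hn dst x0 t' v' Hm); by case: (soq (gs g dst) x0) E2.
    * have := H4d x0; rewrite /sfact.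
      case E: (sst (gs g dst) x0) => [[| |]|] H0; try exact: H4.
      -- rewrite /sfact /= /upd; case: (boolP (x == x0)) => [/eqP Eq|nx]; [subst x|exact: H4].
         split=> //; first [by case: H0 | by case: H0 => _ [_ H0]; rewrite /good /= H0 in Hm].
      -- rewrite /sfact /= /upd; case: (boolP (x == x0)) => [/eqP Eq|nx]; [subst x|exact: H4].
         split=> //; first [by case: H0 | by case: H0 => _ [_ H0]; rewrite /good /= H0 in Hm].
      -- rewrite /sfact /= /upd; case: (boolP (x == x0)) => [/eqP Eq|nx]; [subst x|exact: H4].
         split=> //; first [by case: H0 | by case: H0 => _ [_ H0]; rewrite /good /= H0 in Hm].
-
  move=> g s x m d rest Hf Hq [H1 [H2 [H3 H4]]].
  have Hy : good m d /\ m.1 = x by have := H3 s x (m, d); rewrite Hq /=; apply; left.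
  split; [|split; [exact: H2|split]].
  + move=> src d' m' /=; case: ifP => [/andP [/eqP _ /eqP ->]|_]; last exact: H1.
    by rewrite InS_rcons; case=> [/H1 //|<-]; case: Hy.
  + move=> s' x' y /=; rewrite /upd /=; have [Eq|ne] := eqVneq s' s; [subst s'|]; last exact: H3.
    simp; have [Eq|nx] := eqVneq x' x; [subst x'|]; last exact: H3.
    move=> Hy'; apply: (H3 s); rewrite Hq /=; by right.
  + move=> s' x' /=; rewrite /upd /=; have [Eq|ne] := eqVneq s' s; [subst s'|]; last exact: H4.
    have := H4 s x; rewrite /sfact Hq.
    case E: (sst (gs g s) x) => [[| |]|] H0; try by case: H0.
    case: rest Hq H0 => [|r rest] Hq H0; simp.
    * have [Eq|nx] := eqVneq x' x; [subst x'|]; first by case: H0 => _ [].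
      exact: H4.
    * have [Eq|nx] := eqVneq x' x; [subst x'|]; first by rewrite E; case: H0 => _ [].
      exact: H4.
-
  move=> g s x t c Hf Hst Hc [H1 [H2 [H3 H4]]].
  split; [exact: H1|split; [exact: H2|split]].
  + move=> s' x' y /=; rewrite /upd /=; have [Eq|ne] := eqVneq s' s; [subst s'|]; last exact: H3.
    exact: H3.
  + move=> s' x' /=; rewrite /upd /=; have [Eq|ne] := eqVneq s' s; [subst s'|]; last exact: H4.
    rewrite /sfact /=; have [Eq|nx] := eqVneq x' x; [subst x'|]; last exact: H4.
    by have := H4 s x; rewrite /sfact Hst => -[].
-
  move=> g s [H1 [H2 [H3 H4]]].
  split; [exact: H1|split; [exact: H2|split]].
  + move=> s' x' y /=; rewrite /upd /=; have [Eq|ne] := eqVneq s' s; [subst s'|]; last exact: H3.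
    exact: H3.
  + move=> s' x' /=; rewrite /upd /=; have [Eq|ne] := eqVneq s' s; [subst s'|]; last exact: H4.
    exact: H4.
Qed.


Lemma wfl_persist g a g' q : stp g a g' -> wfl (gw g q) = true -> wfl (gw g' q) = true.
Proof.
case=> {g a g'} /=; intros; unfold upd; simpl; try (case: eqP => [E|//]; subst); rewrite //=.
by rewrite /w_on_send H.
Qed.

Lemma sfl_persist g a g' s : stp g a g' -> sfl (gs g s) = true -> sfl (gs g' s) = true.
Proof.
case=> {g a g'} /=; intros; unfold upd; simpl; try (case: eqP => [E|//]; subst); rewrite //=.
by rewrite /s_on_recv; match goal with H : _ = true |- _ => rewrite H end.
Qed.

Lemma wcnt_mono g a g' q : stp g a g' -> (wcnt (gw g q) <= wcnt (gw g' q))%N.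
Proof.
case=> {g a g'} /=; intros; unfold upd; simpl; try (case: eqP => [E|//]; subst); rewrite //=.
rewrite /w_on_send; case: ifP => //= _.
Qed.

Lemma mdsend_eff g q t v g' : stp g (A_mdsend W n T V C q t v) g' ->
  wfl (gw g' q) = true \/ wcnt (gw g' q) = (wcnt (gw g q)).+1.
Proof.
move=> H; inversion H; subst => /=; rewrite /upd eqxx /w_on_send.
case: ifP => Hf; [by left|by right].
Qed.


Lemma stabilize (u : nat -> nat) i : (forall l, (i <= l)%N -> (u l.+1 <= u l)%N) ->
  exists J, (i <= J)%N /\ forall l, (J <= l)%N -> u l = u J.
Proof.
move=> Hm.
suff: forall N i, (u i <= N)%N -> (forall l, (i <= l)%N -> (u l.+1 <= u l)%N) ->
  exists J, (i <= J)%N /\ forall l, (J <= l)%N -> u l = u J.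
  by move=> /(_ (u i) i (leqnn _) Hm).
move=> N; elim: N => [|N IH] i0 Hu Hm'.
all: have Hdec : forall l, (i0 <= l)%N -> (u l <= u i0)%N by
  move=> l /subnKC <-; elim: (l - i0) => [|k IHk]; rewrite ?addn0 // addnS;
  apply: leq_trans (Hm' _ (leq_addr _ _)) IHk.
- exists i0; split=> // l Hl; have := Hdec l Hl; lia.
- case: (classic (forall l, (i0 <= l)%N -> u l = u i0)) => [H|H]; first by exists i0.
  have [l [Hl Hne]] : exists l, (i0 <= l)%N /\ u l <> u i0.
    apply: NNPP => H'; apply: H => l Hl; apply: NNPP => Hne; apply: H'; by exists l.
  have := Hdec l Hl => Hle.
  have [J [HJ HJs]] := IH l ltac:(lia) (fun l' Hl' => Hm' l' (leq_trans Hl Hl')).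
  exists J; split=> //; exact: leq_trans Hl HJ.
Qed.

Lemma finite_max (P : 'I_n -> nat -> Prop) :
  (forall s t t', (t <= t')%N -> P s t -> P s t') -> (forall s, exists t, P s t) ->
  exists T0, forall s, P s T0.
Proof.
move=> Hm Hex.
suff: forall l : seq 'I_n, exists T0, forall s, s \in l -> P s T0.
  by move=> /(_ (enum 'I_n)) [T0 H]; exists T0 => s; apply: H; rewrite mem_enum.
elim=> [|s l [T1 IH]]; first by exists 0.
have [t Ht] := Hex s; exists (maxn t T1) => s'; rewrite in_cons; case/orP => [/eqP ->|Hs'].
- apply: Hm Ht; exact: leq_maxl.
- apply: Hm (IH _ Hs'); exact: leq_maxr.
Qed.

Variable id : MI.

Definition Bw := 6 * n + 6.
Definition Kw (d : 'I_n) := Bw ^ (n - val d).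
Definition pwt (m : M) (d : 'I_n) : nat :=
  match m.2 with Full _ _ => Kw d | Coded _ _ => 1 end.
Definition chw (d : 'I_n) (m : M) := if m.1 == id then pwt m d else 0.
Definition bw (y : M * 'I_n) := if y.1.1 == id then pwt y.1 y.2 + 2 else 0.
Definition qw (y : M * 'I_n) := pwt y.1 y.2 + 2.
Definition stw (o : option status) :=
  match o with None => 2 | Some Sending => 2 | Some Ready => 1 | Some Delivered => 0 end.
Definition PwS (ws : WS) := sumn (map bw (wbuff ws)).
Definition PsS (ss : SS) := sumn (map qw (soq ss id)) + stw (sst ss id).
Definition PcL (d : 'I_n) (l : seq M) := sumn (map (chw d) l).
Definition PhiW (g : G) := \sum_(q : W) PwS (gw g q).
Definition PhiC (g : G) := \sum_(x : (node W n * 'I_n)%type) PcL x.2 (gch g x.1 x.2).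
Definition PhiS (g : G) := \sum_(s : 'I_n) PsS (gs g s).
Definition Phi_ g := PhiW g + PhiC g + PhiS g.

Lemma PhiW_setw g q ws :
  PhiW (set_w W n T V C g q ws) + PwS (gw g q) = PhiW g + PwS ws.
Proof.
have := sum_upd (fun x => PwS (upd (gw g) q ws x)) (fun x => PwS (gw g x)) q.
rewrite /upd eqxx; apply=> x /negbTE ->; done.
Qed.

Lemma PhiC_setch g src dst l :
  PhiC (set_ch W n T V C g src dst l) + PcL dst (gch g src dst) = PhiC g + PcL dst l.
Proof.
have := sum_upd (fun x : node W n * 'I_n => PcL x.2 (gch (set_ch W n T V C g src dst l) x.1 x.2))
   (fun x => PcL x.2 (gch g x.1 x.2)) (src, dst).
rewrite /= !eqxx /=; apply=> -[a b] /=; rewrite xpair_eqE => /negbTE -> //.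
Qed.

Lemma PhiS_sets g s ss :
  PhiS (set_s W n T V C g s ss) + PsS (gs g s) = PhiS g + PsS ss.
Proof.
have := sum_upd (fun x => PsS (upd (gs g) s ss x)) (fun x => PsS (gs g x)) s.
rewrite /upd eqxx; apply=> x /negbTE ->; done.
Qed.

Lemma PhiC_setw g q ws : PhiC (set_w W n T V C g q ws) = PhiC g. Proof. by []. Qed.
Lemma PhiS_setw g q ws : PhiS (set_w W n T V C g q ws) = PhiS g. Proof. by []. Qed.
Lemma PhiW_setch g a b l : PhiW (set_ch W n T V C g a b l) = PhiW g. Proof. by []. Qed.
Lemma PhiS_setch g a b l : PhiS (set_ch W n T V C g a b l) = PhiS g. Proof. by []. Qed.
Lemma PhiW_sets g s ss : PhiW (set_s W n T V C g s ss) = PhiW g. Proof. by []. Qed.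
Lemma PhiC_sets g s ss : PhiC (set_s W n T V C g s ss) = PhiC g. Proof. by []. Qed.

Lemma sumn_map0 {A} (F : A -> nat) l : (forall y, InS y l -> F y = 0) -> sumn (map F l) = 0.
Proof. elim: l => [|y l IH] //= H; rewrite H /=; [apply: IH => z Hz; apply: H|]; tauto. Qed.

Lemma sumn_map_ge {A} (F : A -> nat) l y : InS y l -> (F y <= sumn (map F l))%N.
Proof. elim: l => [|z l IH] //= [<-|/IH]; lia. Qed.

Lemma sumn_map_le {A} (F : A -> nat) l c : (forall y, InS y l -> F y <= c)%N ->
  (sumn (map F l) <= size l * c)%N.
Proof.
elim: l => [|y l IH] //= H; have := H y (or_introl erefl).
have : (sumn (map F l) <= size l * c)%N by apply: IH => z Hz; apply: H; right.
rewrite mulSn; lia.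
Qed.

Lemma size_mapf {A B : Type} (F : 'I_n -> B) (P : pred 'I_n) :
  (size [seq F z | z <- enum 'I_n & P z] <= n)%N.
Proof. by rewrite size_map size_filter (leq_trans (count_size _ _)) // size_enum_ord. Qed.

Lemma Bw_pos : (0 < Bw)%N. Proof. rewrite /Bw; lia. Qed.

Lemma pwt_pos m d : (0 < pwt m d)%N.
Proof. rewrite /pwt; case: m.2 => // _ _; by rewrite /Kw expn_gt0 Bw_pos. Qed.

Lemma PcL_mid d l1 m l2 : PcL d (l1 ++ m :: l2) = PcL d (l1 ++ l2) + chw d m.
Proof. rewrite /PcL !map_cat !sumn_cat /=; lia. Qed.

Lemma PcL_rcons d l m : PcL d (rcons l m) = PcL d l + chw d m.
Proof. by rewrite /PcL map_rcons sumn_rcons. Qed.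

Lemma out_bound (dst : 'I_n) x t v :
  (sumn (map qw ([seq ((x, Full T V C t v), s') | s' <- enum 'I_n &
                                        (val dst < val s')%N && fs s'] ++
            [seq ((x, Coded T V C t (Phi s' v)), s') | s' <- enum 'I_n &
                                        ~~ fs s' && (s' != dst)])) < Kw dst)%N.
Proof.
set X := Bw ^ (n - (val dst).+1).
have X1 : (1 <= X)%N by rewrite expn_gt0 Bw_pos.
have HK : Kw dst = Bw * X.
  rewrite /Kw /X -expnS; congr (_ ^ _); have : (val dst < n)%N := ltn_ord dst; lia.
rewrite map_cat sumn_cat.
have H1 : (sumn (map qw [seq ((x, Full T V C t v), s') | s' <- enum 'I_n &
             (val dst < val s')%N && fs s']) <= n * (X + 2))%N.
  apply: leq_trans; first apply: (sumn_map_le _ _ (X + 2)).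
    move=> y Hy; have [z [Hz Ez]] := InS_mapf Hy; subst y; rewrite /qw /pwt /= /Kw.
    case/andP: Hz => Hz _; rewrite leq_add2r /X leq_pexp2l ?Bw_pos //; lia.
  by apply: leq_mul => //; apply: size_mapf.
have H2 : (sumn (map qw [seq ((x, Coded T V C t (Phi s' v)), s') | s' <- enum 'I_n &
             ~~ fs s' && (s' != dst)]) <= n * (X + 2))%N.
  apply: leq_trans; first apply: (sumn_map_le _ _ (X + 2)).
    move=> y Hy; have [z [Hz Ez]] := InS_mapf Hy; subst y; rewrite /qw /pwt /=; lia.
  by apply: leq_mul => //; apply: size_mapf.
rewrite HK /Bw; nia.
Qed.

Lemma recv_Ps dst m ss :
  (PsS (s_on_recv W n f T V C Phi dst m ss) + (if m.1 == id then 1 else 0) <=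
   PsS ss + chw dst m)%N.
Proof.
have Hp := pwt_pos m dst.
rewrite /s_on_recv /chw; case: ifP => Hfl; first by case: ifP => _; lia.
case: m Hp => x [t v|t c] /= Hp.
- case E: (sst ss x) => [st|]; first by case: ifP => _; lia.
  rewrite /PsS; simp; case: (x =P id) => [Ex|nx].
  + subst x; rewrite eqxx E /= map_cat sumn_cat.
    have := out_bound dst id t v; rewrite /pwt /=; lia.
  + have nx1 : (x == id) = false by apply/eqP.
    have nx2 : (id == x) = false by apply/eqP => E'; apply: nx.
    rewrite ?nx1 ?nx2; lia.
- case E: (sst ss x) => [[| |]|]; try by case: ifP => _; lia.
  all: rewrite /PsS; simp; case: (x =P id) => [Ex|nx];
   [subst x; rewrite eqxx E /pwt /=; lia
   |have nx1 : (x == id) = false by apply/eqP];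
   have nx2 : (id == x) = false by apply/eqP => E'; apply: nx.
   all: rewrite ?nx1 ?nx2; lia.
Qed.

Lemma ssend_Ps ss x m d rest : soq ss x = (m, d) :: rest -> m.1 = x ->
  (PsS (SState W n T V C (sfl ss)
          (if rest is [::] then upd (sst ss) x (Some Ready) else sst ss)
          (scont ss) (upd (soq ss) x rest)) + chw d m + (if x == id then 1 else 0)
   <= PsS ss)%N.
Proof.
move=> Hq Hm; case: (x =P id) => [Ex|nx].
- rewrite Ex in Hq Hm *; rewrite /PsS /chw Hm eqxx Hq /=.
  case: rest Hq => [|r rest] Hq; simp; rewrite ?eqxx /=; case: (sst ss id) => [[| |]|]; rewrite /= /qw /=; lia.
- have nx1 : (x == id) = false by apply/eqP.
  have nx2 : (id == x) = false by apply/eqP => E'; apply: nx.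
  rewrite /PsS /chw Hm; case: rest Hq => [|r rest] Hq; simp; rewrite ?nx1 ?nx2; lia.
Qed.

Lemma deliver_Ps ss x : sst ss x = Some Ready ->
  (PsS (SState W n T V C (sfl ss) (upd (sst ss) x (Some Delivered))
          (upd (scont ss) x None) (soq ss)) + (if x == id then 1 else 0) <= PsS ss)%N.
Proof.
move=> Hs; rewrite /PsS; simp; case: (x =P id) => [Ex|nx].
- subst x; rewrite eqxx Hs /=; lia.
- have nx1 : (x == id) = false by apply/eqP.
  have nx2 : (id == x) = false by apply/eqP => E'; apply: nx.
  rewrite ?nx1 ?nx2; lia.
Qed.


Definition rel (g : G) (a : act W n T V C) : Prop :=
  match a with
  | A_mdsend q _ _ => wfl (gw g q) = false /\ exists y, InS y (wbuff (gw g q)) /\ y.1.1 = id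
  | A_wsend q => exists y rest, wbuff (gw g q) = y :: rest /\ y.1.1 = id
  | A_recv _ _ m => m.1 = id
  | A_ssend _ x => x = id
  | A_deliver _ x _ _ => x = id
  | _ => False
  end.

Ltac getW := match goal with |- context [set_w _ _ _ _ _ ?g ?q ?ws] => have EW := PhiW_setw g q ws end.
Ltac getC := match goal with |- context [set_ch _ _ _ _ _ ?g ?a ?b ?l] => have EC := PhiC_setch g a b l end.
Ltac getS := match goal with |- context [set_s _ _ _ _ _ ?g ?a ?l] => have ES := PhiS_sets g a l end.

Ltac abs := repeat match goal with
 | |- context [PhiC ?x] => let A := fresh "A" in set A := PhiC x; clearbody A
 | |- context [PhiS ?x] => let A := fresh "A" in set A := PhiS x; clearbody A
 | |- context [PhiW ?x] => let A := fresh "A" in set A := PhiW x; clearbody A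
 | |- context [PsS ?x] => let A := fresh "A" in set A := PsS x; clearbody A
 | |- context [PcL ?x ?y] => let A := fresh "A" in set A := PcL x y; clearbody A
 | |- context [chw ?x ?y] => let A := fresh "A" in set A := chw x y; clearbody A
 end.

Lemma Phi_step g a g' : stp g a g' -> Inv g ->
  (forall q, wfl (gw g q) = false -> (q, (wcnt (gw g q)).+1) != id) ->
  (Phi_ g' <= Phi_ g)%N /\ (rel g a -> (Phi_ g' < Phi_ g)%N).
Proof.
move=> St; case: St => {g a g'}.
- move=> g q t v HI Hfr; rewrite /Phi_ PhiC_setw PhiS_setw; getW.
  move: EW; rewrite /w_on_send; case: ifP => Hf EW.
  + split; [lia|by case=> Hf'; rewrite Hf' in Hf].
  + have E0 : PwS (WState W n T V C false true (wcnt (gw g q)).+1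
       [seq ((q, (wcnt (gw g q)).+1), Full T V C t v, s) | s <- enum 'I_n & fs s]
       (Some (q, (wcnt (gw g q)).+1)) (Some t)) = 0.
      rewrite /PwS /=; apply: sumn_map0 => y Hy; have [z [_ Ez]] := InS_mapf Hy; subst y.
      by rewrite /bw /=; move/negbTE: (Hfr q Hf) => ->.
    split; first lia.
    case=> _ [y [Hy Ey]].
    have : (2 <= PwS (gw g q))%N.
      apply: leq_trans (sumn_map_ge bw _ _ Hy); rewrite /bw Ey eqxx; lia.
    lia.
- move=> g q m d rest Hf Hb HI Hfr; rewrite /Phi_ PhiS_setch PhiS_setw PhiW_setch.
  getW; getC.
  rewrite /= PcL_rcons PhiC_setw in EC.
  rewrite /PwS /= Hb /= in EW.
  have Hbc : bw (m, d) = chw d m + (if m.1 == id then 2 else 0) by rewrite /bw /chw /=; case: ifP.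
  split; first lia.
  case=> y [r [Hb' Hy]]; rewrite Hb in Hb'; case: Hb' => ? _; subst y.
  rewrite /= Hy eqxx in Hbc; lia.
- move=> g q t _ _ _ _ HI Hfr; rewrite /Phi_ PhiC_setw PhiS_setw; getW.
  rewrite /PwS /= in EW; split; [lia|done].
- move=> g q HI Hfr; rewrite /Phi_ PhiC_setw PhiS_setw; getW.
  rewrite /PwS /= in EW; split; [lia|done].
- move=> g src dst m l1 l2 Hch HI Hfr; rewrite /Phi_ PhiW_sets PhiW_setch PhiC_sets.
  getS; getC.
  rewrite Hch PcL_mid in EC.
  rewrite PhiS_setch /= in ES.
  have HR := recv_Ps dst m (gs g dst).
  move: HR; case: ifP => Hid HR; move: EC ES HR; abs => EC ES HR; (split; [lia|]).
  + move=> _; lia.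
  + by move=> /= Hm; rewrite Hm eqxx in Hid.
- move=> g s x m d rest Hf Hq [H1 [H2 [H3 H4]]] Hfr.
  have Hm : m.1 = x by have := H3 s x (m, d); rewrite Hq /=; case; [left|].
  rewrite /Phi_ PhiW_setch PhiS_setch PhiW_sets.
  getC; rewrite PhiC_sets /= PcL_rcons in EC.
  getS; cbv zeta in ES |- *.
  have HS := ssend_Ps (gs g s) x m d rest Hq Hm.
  move: HS; case: ifP => Hid HS; move: EC ES HS; abs => EC ES HS; (split; [lia|]).
  + move=> _; lia.
  + by move=> /= Hm'; rewrite Hm' eqxx in Hid.
- move=> g s x t c Hf Hst Hc HI Hfr; rewrite /Phi_ PhiW_sets PhiC_sets.
  getS; cbv zeta in ES |- *.
  have HS := deliver_Ps (gs g s) x Hst.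
  move: HS; case: ifP => Hid HS; move: ES HS; abs => ES HS; (split; [lia|]).
  + move=> _; lia.
  + by move=> /= Hm; rewrite Hm eqxx in Hid.
- move=> g s HI Hfr; rewrite /Phi_ PhiW_sets PhiC_sets.
  getS; cbv zeta in ES |- *.
  rewrite /PsS /= in ES; split; [lia|done].
Qed.


Lemma frame_s g a g' s : stp g a g' -> ~ rel g a ->
  sst (gs g' s) id = sst (gs g s) id /\ scont (gs g' s) id = scont (gs g s) id /\
  soq (gs g' s) id = soq (gs g s) id.
Proof.
case=> {g a g'} //=.
- move=> g src dst m l1 l2 Hch Hr; rewrite /upd /=; case: eqP => [->|//].
  rewrite /s_on_recv; case: ifP => // _.
  have nx : (id == m.1) = false by apply/eqP => E; apply: Hr; rewrite E.
  clear Hch; case: m Hr nx => x [t v|t c] /= Hr nx.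
  + case: (sst (gs g dst) x) => // ; simp; by rewrite nx.
  + case: (sst (gs g dst) x) => [[| |]|] //; simp; by rewrite nx.
- move=> g s0 x m d rest _ _ Hr; rewrite /upd /=; case: eqP => [->|//].
  have nx : (id == x) = false by apply/eqP => E; apply: Hr; rewrite E.
  case: rest => [|r rest]; simp; by rewrite nx.
- move=> g s0 x t c _ _ _ Hr; rewrite /upd /=; case: eqP => [->|//].
  have nx : (id == x) = false by apply/eqP => E; apply: Hr; rewrite E.
  simp; by rewrite nx.
- move=> g s0; rewrite /upd /=; case: eqP => [->|//].
  by [].
Qed.

Lemma frame_w1 g a g' p : stp g a g' -> ~ rel g a -> Inv g -> wfl (gw g p) = false ->
  (exists y, InS y (wbuff (gw g p)) /\ y.1.1 = id) ->
  wfl (gw g' p) = true \/ wbuff (gw g' p) = wbuff (gw g p).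
Proof.
case=> {g a g'} /=.
- move=> g q t v Hr _ Hf Hy; rewrite /upd /=; case: eqP => [E|_]; last by right.
  by subst q; exfalso; apply: Hr.
- move=> g q m d rest Hf' Hb Hr [_ [H2 _]] Hf [y [Hy Ey]]; rewrite /upd /=.
  case: eqP => [E|_]; last by right.
  subst q; exfalso; apply: Hr; exists (m, d), rest; split=> //.
  have := H2 p (m, d); rewrite Hb => /(_ (or_introl erefl)) [_ ->].
  by have [_ <-] := H2 p y Hy.
- move=> g q t _ _ _ _ _ _ _ _; rewrite /upd /=; case: eqP => [E|_]; subst; by right.
- move=> g q _ _ _ _; rewrite /upd /=; case: eqP => [E|_]; subst; [by left|by right].
- by right.
- by right.
- by right.
- by right.
Qed.

Lemma frame_w2 g a g' p : stp g a g' ->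
  (wfl (gw g p) = false -> (p, (wcnt (gw g p)).+1) != id) ->
  (forall y, InS y (wbuff (gw g p)) -> y.1.1 <> id) ->
  (forall y, InS y (wbuff (gw g' p)) -> y.1.1 <> id).
Proof.
case=> {g a g'} /=; try by [].
- move=> g q t v Hfr Hb y; rewrite /upd /=; case: eqP => [E|_]; last exact: Hb.
  subst q; rewrite /w_on_send; case: ifP => Hf; first exact: Hb.
  move=> /= Hy; have [z [_ Ez]] := InS_mapf Hy; subst y => /= E.
  by move: (Hfr Hf); rewrite E eqxx.
- move=> g q m d rest _ Hb' Hfr Hb y; rewrite /upd /=; case: eqP => [E|_]; last exact: Hb.
  subst q => /= Hy; apply: Hb; rewrite Hb' /=; by right.
- move=> g q t _ _ _ _ Hfr Hb y; rewrite /upd /=; case: eqP => [E|_]; subst; exact: Hb.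
- move=> g q Hfr Hb y; rewrite /upd /=; case: eqP => [E|_]; subst; exact: Hb.
Qed.


Variables (e : execution W n T V C) (He : is_execution W n f T V C Phi e).
Local Notation st l := (ex_st W n T V C e l).
Local Notation ac l := (ex_act W n T V C e l).

Lemma ex_step l : match ac l with None => st l.+1 = st l | Some a => stp (st l) a (st l.+1) end.
Proof. exact: (proj2 He l). Qed.

Lemma Inv_all (hf : (1 <= f)%N) (hn : (f.*2 + 1 <= n)%N) l : Inv (st l).
Proof.
elim: l => [|l IH]; first by rewrite (proj1 He); exact: Inv_init.
have := ex_step l; case: (ac l) => [a St|->//]; exact: Inv_step St IH.
Qed.

Lemma wfl_mono_ex q l l' : (l <= l')%N -> wfl (gw (st l) q) = true -> wfl (gw (st l') q) = true.
Proof.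
move=> /subnKC <-; elim: (l' - l) => [|k IH]; rewrite ?addn0 // addnS => H.
have := ex_step (l + k); case: (ac _) => [a St|->]; [exact: wfl_persist St (IH H)|exact: IH].
Qed.

Lemma sfl_mono_ex s l l' : (l <= l')%N -> sfl (gs (st l) s) = true -> sfl (gs (st l') s) = true.
Proof.
move=> /subnKC <-; elim: (l' - l) => [|k IH]; rewrite ?addn0 // addnS => H.
have := ex_step (l + k); case: (ac _) => [a St|->]; [exact: sfl_persist St (IH H)|exact: IH].
Qed.

Lemma main_sec (hf : (1 <= f)%N) (hn : (f.*2 + 1 <= n)%N) (Hfair : fair W n T V C e)
  i0 p t v :
  ac i0 = Some (A_mdsend W n T V C p t v) -> id = (p, (wcnt (gw (st i0) p)).+1) ->
  exists j, (i0 < j)%N /\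
    (wfl (gw (st j) p) = true \/
       forall l, (j <= l)%N -> ~ w_holds W n T V C Phi id v (gw (st l) p)) /\
    (forall s : 'I_n, sfl (gs (st j) s) = true \/
       forall l, (j <= l)%N -> ~ s_holds W n T V C Phi id v (gs (st l) s)).
Proof.
move=> Hact Hid.
have HI := Inv_all hf hn.
have Hp : forall l, (i0 < l)%N -> wfl (gw (st l) p) = true \/ (id.2 <= wcnt (gw (st l) p))%N.
  elim=> [//|l IH] Hl.
  have [Hl'|Heq] : (i0 < l)%N \/ i0 = l by lia.
  - move: (IH Hl') => {IH}; have := ex_step l; case: (ac l) => [a St|->//].
    case=> [Hf|Hc]; first by left; exact: wfl_persist St Hf.
    right; have := wcnt_mono _ _ _ p St; lia.
  - subst l; have := ex_step i0; rewrite Hact => St.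
    case: (mdsend_eff _ _ _ _ _ St) => [Hf|Hc]; [by left|right; by rewrite Hc Hid /=].
have Hfr : forall l, (i0 < l)%N -> forall q, wfl (gw (st l) q) = false ->
    (q, (wcnt (gw (st l) q)).+1) != id.
  move=> l Hl q Hf; apply/eqP => E.
  have Eq : q = p by rewrite Hid in E; case: E.
  subst q; case: (Hp l Hl) => [Hf'|Hc]; first by rewrite Hf' in Hf.
  rewrite -E /= in Hc; lia.
have Hmon : forall l, (i0.+1 <= l)%N -> (Phi_ (st l.+1) <= Phi_ (st l))%N.
  move=> l Hl; have := ex_step l; case: (ac l) => [a St|->//].
  exact: (Phi_step _ _ _ St (HI l) (Hfr l Hl)).1.
have [J [HJ HJs]] := stabilize (fun l => Phi_ (st l)) i0.+1 Hmon.
have Hnr : forall l, (J <= l)%N -> forall a, ac l = Some a -> ~ rel (st l) a.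
  move=> l Hl a Ha Hr; have := ex_step l; rewrite Ha => St.
  have := (Phi_step _ _ _ St (HI l) (Hfr l (leq_trans HJ Hl))).2 Hr.
  rewrite (HJs l Hl) (HJs l.+1 (leq_trans Hl (leqnSn _))); lia.
have Hw : exists tw, wfl (gw (st tw) p) = true \/
    forall l, (tw <= l)%N -> ~ w_holds W n T V C Phi id v (gw (st l) p).
  case Ef: (wfl (gw (st J) p)); first by exists J; left.
  case: (classic (exists y, InS y (wbuff (gw (st J) p)) /\ y.1.1 = id)) => [Hy|Hny].
  - have Hfz : forall l, (J <= l)%N -> wfl (gw (st l) p) = true \/
        wbuff (gw (st l) p) = wbuff (gw (st J) p).
      move=> l /subnKC <-; elim: (l - J) => [|k IH]; first by rewrite addn0; right.
      rewrite addnS; have := ex_step (J + k); case Ea: (ac (J + k)) => [a|] St; last first.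
        by rewrite St.
      case: IH => [Hf|Eb]; first by left; exact: wfl_persist St Hf.
      case Ef': (wfl (gw (st (J + k)) p)).
        by left; exact: wfl_persist St Ef'.
      have Hy' : exists y, InS y (wbuff (gw (st (J + k)) p)) /\ y.1.1 = id by rewrite Eb.
      case: (frame_w1 _ _ _ p St (Hnr _ (leq_addr k J) a Ea) (HI _) Ef' Hy') => [H|H].
        by left.
      by right; rewrite H.
    have [j [Hj Hd]] := (proj1 Hfair) p J.
    case: (Hfz j Hj) => [Hf|Eb]; first by exists j; left.
    case: Hd => [Hd|Hd].
    + case Ef': (wfl (gw (st j) p)); first by exists j; left.
      exfalso; apply: Hd; split=> //; rewrite Eb; case: Hy => y [Hy _].
      by case: (wbuff _) Hy.
    + exfalso; apply: (Hnr j Hj _ Hd) => /=.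
      case: Hy => y0 [Hy0 Ey0]; rewrite -Eb in Hy0.
      have [_ E0] := (HI j).2.1 p y0 Hy0.
      move: Hy0; case Eb': (wbuff (gw (st j) p)) => [//|y rest] _.
      exists y, rest; split=> //.
      have [_ ->] := (HI j).2.1 p y (ltac:(rewrite Eb'; left; done)).
      by rewrite -E0.
  - have Hnone : forall l, (J <= l)%N -> forall y, InS y (wbuff (gw (st l) p)) -> y.1.1 <> id.
      move=> l /subnKC <-; elim: (l - J) => [|k IH].
        by rewrite addn0 => y Hy E; apply: Hny; exists y.
      rewrite addnS; have := ex_step (J + k); case: (ac (J + k)) => [a St|->//].
      apply: (frame_w2 _ _ _ p St _ IH); apply: Hfr; apply: leq_trans HJ _; exact: leq_addr.
    exists J; right => l Hl [m [d [Hm [Em _]]]]; exact: (Hnone l Hl (m, d) Hm Em).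
have Hs : forall s, exists ts, sfl (gs (st ts) s) = true \/
    forall l, (ts <= l)%N -> ~ s_holds W n T V C Phi id v (gs (st l) s).
  move=> s.
  have Hfz : forall l, (J <= l)%N -> sst (gs (st l) s) id = sst (gs (st J) s) id /\
      scont (gs (st l) s) id = scont (gs (st J) s) id /\ soq (gs (st l) s) id = soq (gs (st J) s) id.
    move=> l /subnKC <-; elim: (l - J) => [|k IH]; first by rewrite addn0.
    rewrite addnS; have := ex_step (J + k); case Ea: (ac (J + k)) => [a|] St; last by rewrite St.
    have [E1 [E2 E3]] := frame_s _ _ _ s St (Hnr _ (leq_addr k J) a Ea).
    by rewrite E1 E2 E3.
  have Hsf := (HI J).2.2.2 s id.
  case Efl: (sfl (gs (st J) s)); first by exists J; left.
  move: Hsf; rewrite /sfact; case Es: (sst (gs (st J) s) id) => [[| |]|] Hsf.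
  - have [j [Hj Hd]] := (proj2 (proj2 (proj2 Hfair))) s id J.
    case: (Hfz j Hj) => E1 [E2 E3].
    case: Hd => [Hd|[t0 [c0 Hd]]].
    + case Ef': (sfl (gs (st j) s)); first by exists j; left.
      exfalso; apply: Hd; split=> //; rewrite E1 Es; split=> //; rewrite E2; exact: Hsf.1.
    + by exfalso; apply: (Hnr j Hj _ Hd).
  - have [j [Hj Hd]] := (proj1 (proj2 (proj2 Hfair))) s id J.
    case: (Hfz j Hj) => E1 [E2 E3].
    case: Hd => [Hd|Hd].
    + case Ef': (sfl (gs (st j) s)); first by exists j; left.
      exfalso; apply: Hd; split=> //; rewrite E3; exact: Hsf.1.
    + by exfalso; apply: (Hnr j Hj _ Hd).
  - exists J; right => l Hl; case: (Hfz l Hl) => E1 [E2 E3].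
    rewrite /s_holds E2 E3 (proj1 Hsf) (proj2 Hsf).
    by case=> [[t0 [c0 [H _]]]|[m [d [H _]]]].
  - exists J; right => l Hl; case: (Hfz l Hl) => E1 [E2 E3].
    rewrite /s_holds E2 E3 (proj1 Hsf) (proj2 Hsf).
    by case=> [[t0 [c0 [H _]]]|[m [d [H _]]]].
have [TS HTS] := finite_max (fun s t => sfl (gs (st t) s) = true \/
    forall l, (t <= l)%N -> ~ s_holds W n T V C Phi id v (gs (st l) s))
  (fun s t0 t1 Ht H => match H with
    | or_introl H => or_introl (sfl_mono_ex s t0 t1 Ht H)
    | or_intror H => or_intror (fun l Hl => H l (leq_trans Ht Hl)) end) Hs.
case: Hw => tw Htw.
exists (maxn (maxn TS tw) J); split; first by apply: leq_trans HJ _; exact: leq_maxr.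
split.
- case: Htw => [H|H]; [left|right].
  + apply: wfl_mono_ex H; rewrite leq_max; apply/orP; left; exact: leq_maxr.
  + move=> l Hl; apply: H; apply: leq_trans Hl; rewrite leq_max; apply/orP; left; exact: leq_maxr.
- move=> s; case: (HTS s) => [H|H]; [left|right].
  + apply: sfl_mono_ex H; rewrite leq_max; apply/orP; left; exact: leq_maxl.
  + move=> l Hl; apply: H; apply: leq_trans Hl; rewrite leq_max; apply/orP; left; exact: leq_maxl.
Qed.


End Pf.

Theorem theorem2 (W : finType) (n f k : nat) (dT : Order.disp_t)
    (T : orderType dT) (V C : Type) (Phi : 'I_n -> V -> C)
    (e : execution W n T V C)
    (i0 : nat) (p : W) (t : T) (v : V) :
  (1 <= f)%N -> (f.*2 + 1 <= n)%N ->
  mds n V C Phi k ->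
  is_execution W n f T V C Phi e ->
  fair W n T V C e -> reliable_channels W n T V C e ->
  crash_bound W n f T V C e -> well_formed W n T V C e ->
  ex_act W n T V C e i0 = Some (A_mdsend W n T V C p t v) ->
  let id := (p, (w_mCount W n T V C (g_w W n T V C (ex_st W n T V C e i0) p)).+1) in
  exists j, (i0 < j)%N /\
    (w_failed W n T V C (g_w W n T V C (ex_st W n T V C e j) p) = true \/
       forall l, (j <= l)%N ->
         ~ w_holds W n T V C Phi id v (g_w W n T V C (ex_st W n T V C e l) p)) /\
    (forall s : 'I_n,
       s_failed W n T V C (g_s W n T V C (ex_st W n T V C e j) s) = true \/
       forall l, (j <= l)%N ->
         ~ s_holds W n T V C Phi id v (g_s W n T V C (ex_st W n T V C e l) s)).
Proof.
move=> hf hn _ He Hfair _ _ _ Hact /=.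
exact: (main_sec W n f T V C Phi _ e He hf hn Hfair i0 p t v Hact erefl).
Qed.
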